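(* Let $G$ be a $K_4$-free disk graph, let $\mathsf{opt}$ be the minimum size of an odd cycle transversal of $G$, and let $\mathcal{T}$ be a maximal packing of the triangles of $G$. Let $\rho_0\ge 1$ and let $X_1$ be an odd cycle transversal of $G-V(\mathcal{T})$ of size at most $\rho_0$ times the minimum size of an odd cycle transversal of $G-V(\mathcal{T})$. Set $S_1=V(\mathcal{T})\cup X_1$ and $a=|\mathcal{T}|/\mathsf{opt}$ (when $\mathsf{opt}>0$). Then $|S_1|\le (3a+\rho_0(1-a))\cdot\mathsf{opt}$, equivalently $|S_1|\le 3|\mathcal{T}|+\rho_0(\mathsf{opt}-|\mathcal{T}|)$.
   Context: A disk graph is the intersection graph of a finite set of closed disks in the plane; $K_4$-free means no complete subgraph on 4 vertices. An odd cycle transversal of $G$ is a set $S\subseteq V(G)$ with $G-S$ bipartite. A triangle is a set of three pairwise adjacent vertices; a packing of triangles is a collection of pairwise vertex-disjoint triangles, maximal if no further triangle of $G$ can be added; $V(\mathcal{T})$ is the union of the triangles in $\mathcal{T}$. In the paper $X_1$ is the output of a $\rho_0$-approximation algorithm for \textsc{Bipartization} on planar graphs (the graph $G-V(\mathcal{T})$ is triangle-free, hence planar). *)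

(* Defs.v *)
From mathcomp Require Import all_boot all_order all_algebra.
Set Implicit Arguments. Unset Strict Implicit. Unset Printing Implicit Defensive.
Import Order.TTheory GRing.Theory Num.Theory.
Local Open Scope ring_scope.

Section Defs.
Variables (R : realFieldType) (T : finType).

(* Disk graph: vertex v is the closed disk with center (cx v, cy v) and
   radius rad v (> 0); distinct u v are adjacent iff their closed disks
   intersect, i.e. the distance between centers is <= sum of radii. *)
Definition disk_adj (cx cy rad : T -> R) : rel T :=
  fun u v => (u != v) &&
    ((cx u - cx v) ^+ 2 + (cy u - cy v) ^+ 2 <= (rad u + rad v) ^+ 2).

Variable (e : rel T).

Definition K4_free : Prop :=
  forall K : {set T}, #|K| = 4%N ->
    ~ (forall u v, u \in K -> v \in K -> u != v -> e u v).

Definition is_triangle (t : {set T}) : bool :=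
  (#|t| == 3%N) && [forall u in t, forall v in t, (u != v) ==> e u v].

Definition bipartite_on (D : {set T}) : bool :=
  [exists f : {ffun T -> bool},
     [forall u in D, forall v in D, e u v ==> (f u != f v)]].

Definition oct_of (D S : {set T}) : bool :=
  (S \subset D) && bipartite_on (D :\: S).

(* minimum size of an odd cycle transversal of G[D] (D itself is one) *)
Definition oct_number (D : {set T}) : nat :=
  \big[minn/#|D|]_(S : {set T} | oct_of D S) #|S|.

Definition triangle_packing (P : {set {set T}}) : Prop :=
  (forall t, t \in P -> is_triangle t) /\ trivIset P.

Definition maximal_triangle_packing (P : {set {set T}}) : Prop :=
  triangle_packing P /\
  forall t : {set T}, is_triangle t -> t \notin P -> ~ [disjoint t & cover P].

End Defs.

(* Main.v *)
Require Import Defs.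
From mathcomp Require Import all_boot all_order all_algebra.
From mathcomp Require Import ring.
Import Order.TTheory GRing.Theory Num.Theory.
Local Open Scope ring_scope.

Lemma bigmin_le (I : eqType) (r : seq I) (P : pred I) (F : I -> nat) (d : nat) z :
  z \in r -> P z -> (\big[minn/d]_(i <- r | P i) F i <= F z)%N.
Proof.
elim: r => //= i r IH; rewrite inE big_cons => /predU1P [-> Pz | zr Pz].
  by rewrite Pz; exact: geq_minl.
case: (P i); last exact: IH.
by apply: leq_trans (geq_minr _ _) _; exact: IH.
Qed.

Lemma oct_le (T : finType) (e : rel T) D S :
  oct_of e D S -> (oct_number e D <= #|S|)%N.
Proof.
move=> hS; rewrite /oct_number; apply: bigmin_le => //; exact: mem_index_enum.
Qed.

Lemma oct_ge (T : finType) (e : rel T) D k :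
  (forall S, oct_of e D S -> (k <= #|S|)%N) -> (k <= oct_number e D)%N.
Proof.
move=> H; rewrite /oct_number; apply: (big_ind (fun x => k <= x)%N).
- apply: H; rewrite /oct_of subxx /=; apply/existsP; exists [ffun=> true].
  by apply/forallP => u; apply/implyP; rewrite setDv inE.
- by move=> x y hx hy; rewrite leq_min hx hy.
- exact: H.
Qed.

Lemma key (T : finType) (e : rel T) (P : {set {set T}}) :
  triangle_packing e P ->
  (oct_number e (~: cover P) + #|P| <= oct_number e [set: T])%N.
Proof.
move=> [htri htriv]; apply: oct_ge => S /andP [_ /existsP [f /forallP hf]].
have hit : forall t, t \in P -> exists x, x \in t :&: S.
  move=> t /htri /andP [/eqP h3 /forallP ht].
  case: (set_0Vmem (t :&: S)) => [h0|[x0 hx0]]; last by exists x0.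
  have : (2 < #|t|)%N by rewrite h3.
  move/card_gt2P => [x [y [z [[xt yt zt] [xy yz zx]]]]].
  have nS : forall w, w \in t -> w \in [set: T] :\: S.
    move=> w wt; rewrite !inE andbT; apply/negP => wS.
    by move/setP: h0 => /(_ w); rewrite !inE wt wS.
  have adj : forall u v, u \in t -> v \in t -> u != v -> f u != f v.
    move=> u v ut vt uv.
    have := ht u; rewrite ut /= => /forallP /(_ v); rewrite vt uv /= => euv.
    have := hf u; rewrite nS //= => /forallP /(_ v); rewrite nS //= euv //.
  have := adj _ _ xt yt xy; have := adj _ _ yt zt yz; have := adj _ _ zt xt zx.
  by case: (f x); case: (f y); case: (f z).
pose g t := [pick x in t :&: S].
have ginj : {in P &, injective g}.
  move=> t1 t2 h1 h2; rewrite /g.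
  case: pickP => [x hx|h0]; last by have [x hx] := hit t1 h1; move: (h0 x); rewrite hx.
  case: pickP => [y hy|h0]; last by have [y hy] := hit t2 h2; move: (h0 y); rewrite hy.
  move=> [exy]; subst y; apply/eqP/negPn/negP => ne.
  move/trivIsetP: htriv => /(_ t1 t2 h1 h2 ne) /disjoint_setI0 hd.
  move: hx hy; rewrite !inE => /andP [x1 _] /andP [x2 _].
  by move/setP: hd => /(_ x); rewrite !inE x1 x2.
have hsub : g @: P \subset Some @: (S :&: cover P).
  apply/subsetP => o /imsetP [t tP ->]; rewrite /g; case: pickP => [x hx|h0].
    apply/imsetP; exists x => //; move: hx; rewrite !inE => /andP [xt ->] /=.
    by apply/bigcupP; exists t.
  by have [x hx] := hit t tP; move: (h0 x); rewrite hx.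
have c1 : (#|P| <= #|S :&: cover P|)%N.
  rewrite -(card_in_imset ginj) -(card_imset (S :&: cover P) (@Some_inj _)).
  exact: subset_leq_card.
have c2 : (oct_number e (~: cover P) <= #|S :\: cover P|)%N.
  apply: oct_le; rewrite /oct_of; apply/andP; split.
    by apply/subsetP => x; rewrite !inE => /andP [].
  apply/existsP; exists f; apply/forallP => u; apply/implyP => hu.
  apply/forallP => v; apply/implyP => hv.
  have hu' : u \in [set: T] :\: S.
    by move: hu; rewrite !inE => /andP [h1 h2]; move: h1; rewrite h2 /= andbT.
  have hv' : v \in [set: T] :\: S.
    by move: hv; rewrite !inE => /andP [h1 h2]; move: h1; rewrite h2 /= andbT.
  by have := hf u; rewrite hu' => /forallP /(_ v); rewrite hv'.
by rewrite -(cardsID (cover P) S) addnC leq_add.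
Qed.

Theorem lemma7 (R : realFieldType) (T : finType) (cx cy rad : T -> R)
  (hrad : forall v, 0 < rad v)
  (hK4 : K4_free (disk_adj cx cy rad))
  (P : {set {set T}}) (hP : maximal_triangle_packing (disk_adj cx cy rad) P)
  (rho0 : R) (hrho : 1 <= rho0)
  (X1 : {set T})
  (hX1 : oct_of (disk_adj cx cy rad) (~: cover P) X1)
  (hX1s : (#|X1|%:R : R) <=
          rho0 * (oct_number (disk_adj cx cy rad) (~: cover P))%:R) :
  let opt := oct_number (disk_adj cx cy rad) [set: T] in
  let S1 := cover P :|: X1 in
  ((0 < opt)%N ->
     let a := (#|P|%:R / opt%:R : R) in
     (#|S1|%:R : R) <= (3 * a + rho0 * (1 - a)) * opt%:R) /\
  (#|S1|%:R : R) <= 3 * (#|P|%:R) + rho0 * (opt%:R - #|P|%:R).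
Proof.
move=> opt S1.
have [[htri htriv] _] := hP.
have hk := @key _ _ P (conj htri htriv).
have hcov : (#|cover P| <= 3 * #|P|)%N.
  move/eqP: htriv => <-; rewrite mulnC -sum_nat_const; apply: leq_sum => t /htri.
  by case/andP => /eqP ->.
have hS1 : (#|S1| <= 3 * #|P| + #|X1|)%N.
  by apply: leq_trans (leq_card_setU _ _) _; rewrite leq_add2r.
have main : (#|S1|%:R : R) <= 3 * (#|P|%:R) + rho0 * (opt%:R - #|P|%:R).
  apply: (@le_trans _ _ ((3 * #|P| + #|X1|)%N%:R)); first by rewrite ler_nat.
  rewrite natrD natrM lerD2l; apply: le_trans hX1s _.
  rewrite ler_pM2l; last by apply: lt_le_trans hrho.
  rewrite lerBrDr -natrD ler_nat; exact: hk.
split; last exact: main.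
move=> hopt; cbv zeta; apply: le_trans main _.
have h0 : (opt%:R : R) != 0 by rewrite pnatr_eq0 -lt0n.
set p : R := #|P|%:R; set o : R := opt%:R.
have -> : (3 * (p / o) + rho0 * (1 - p / o)) * o = 3 * p + rho0 * (o - p).
  by field.
by [].
Qed.
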